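(* Let $G$ be a two-step nilpotent group and let $w_1(x,y)$, $w_2(x,y)$ be group words in two letters such that the map $S\colon G^2\to G^2$, $S(x,y)=(w_1(x,y),w_2(x,y))$, is a solution of the Yang--Baxter equation on $G$. Then the map $S^{Ab}\colon(G^{Ab})^2\to(G^{Ab})^2$, $S^{Ab}(x,y)=(w_1(x,y),w_2(x,y))$ (the same words evaluated in the abelianization $G^{Ab}=G/[G,G]$), is a (verbal) solution of the Yang--Baxter equation on $G^{Ab}$.
   Context: For a nonempty set $X$, a map $S\colon X^2\to X^2$ is a solution of the Yang--Baxter equation on $X$ if $S_1S_2S_1=S_2S_1S_2$ as maps $X^3\to X^3$, where $S_1=S\times\mathrm{Id}$ and $S_2=\mathrm{Id}\times S$. A two-step nilpotent group is a group of nilpotency class at most $2$. A solution is verbal if both of its components are given by evaluating group words. *)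

(* Defs.v *)
Set Implicit Arguments.

Record Group := {
  carrier :> Type;
  gmul : carrier -> carrier -> carrier;
  gone : carrier;
  ginv : carrier -> carrier;
  gmulA : forall x y z, gmul x (gmul y z) = gmul (gmul x y) z;
  gmul1l : forall x, gmul gone x = x;
  gmul1r : forall x, gmul x gone = x;
  gmulVl : forall x, gmul (ginv x) x = gone;
  gmulVr : forall x, gmul x (ginv x) = gone
}.

Arguments gmul {g}.
Arguments gone {g}.
Arguments ginv {g}.

Definition comm {G : Group} (x y : G) : G :=
  gmul (gmul (ginv x) (ginv y)) (gmul x y).

Definition two_step_nilpotent (G : Group) : Prop :=
  forall x y z : G, gmul (comm x y) z = gmul z (comm x y).

Inductive derived (G : Group) : G -> Prop :=
| derived_comm : forall x y : G, derived G (comm x y)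
| derived_one : derived G gone
| derived_mul : forall a b, derived G a -> derived G b -> derived G (gmul a b)
| derived_inv : forall a, derived G a -> derived G (ginv a).

Definition is_hom (G H : Group) (f : G -> H) : Prop :=
  forall x y : G, f (gmul x y) = gmul (f x) (f y).

(** [pi : G -> A] presents A as the abelianization G^Ab = G/[G,G]:
    pi is a surjective homomorphism whose kernel is exactly [G,G]. *)
Definition abelianization_map (G A : Group) (pi : G -> A) : Prop :=
  is_hom G A pi /\ (forall a : A, exists g : G, pi g = a) /\
  (forall g : G, pi g = gone <-> derived G g).

Inductive word2 : Type :=
| Wx : word2
| Wy : word2
| Wone : word2
| Wmul : word2 -> word2 -> word2
| Winv : word2 -> word2.

Fixpoint eval_word (G : Group) (w : word2) (x y : G) : G :=
  match w with
  | Wx => x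
  | Wy => y
  | Wone => gone
  | Wmul u v => gmul (eval_word G u x y) (eval_word G v x y)
  | Winv u => ginv (eval_word G u x y)
  end.

Definition S_1 {X : Type} (S : X * X -> X * X) (t : X * X * X) : X * X * X :=
  let '(a, b, c) := t in let '(a', b') := S (a, b) in (a', b', c).
Definition S_2 {X : Type} (S : X * X -> X * X) (t : X * X * X) : X * X * X :=
  let '(a, b, c) := t in let '(b', c') := S (b, c) in (a, b', c').

Definition is_YBE_solution {X : Type} (S : X * X -> X * X) : Prop :=
  forall t : X * X * X, S_1 S (S_2 S (S_1 S t)) = S_2 S (S_1 S (S_2 S t)).

Definition verbal_map (G : Group) (w1 w2 : word2) (p : G * G) : G * G :=
  (eval_word G w1 (fst p) (snd p), eval_word G w2 (fst p) (snd p)).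

(* Main.v *)
Require Import Defs.

Section H.
Variables (G A : Group) (pi : G -> A).
Hypothesis hom : is_hom G A pi.

Lemma cancel_l (a b c : A) : gmul a b = gmul a c -> b = c.
Proof.
  intro E. rewrite <- (gmul1l A b), <- (gmul1l A c), <- (gmulVl A a),
   <- !gmulA, E. reflexivity.
Qed.

Lemma pi_one : pi gone = gone.
Proof.
  apply (cancel_l (pi gone)). rewrite <- hom, gmul1l, gmul1r. reflexivity.
Qed.

Lemma pi_inv x : pi (ginv x) = ginv (pi x).
Proof.
  apply (cancel_l (pi x)). rewrite <- hom, !gmulVr. apply pi_one.
Qed.

Lemma pi_eval w x y : pi (eval_word G w x y) = eval_word A w (pi x) (pi y).
Proof.
  induction w; simpl; try reflexivity.
  - apply pi_one.
  - rewrite hom, IHw1, IHw2; reflexivity.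
  - rewrite pi_inv, IHw; reflexivity.
Qed.

Definition p3 (t : G * G * G) : A * A * A :=
  let '(a, b, c) := t in (pi a, pi b, pi c).

Lemma p3_S1 w1 w2 t : p3 (S_1 (verbal_map G w1 w2) t) = S_1 (verbal_map A w1 w2) (p3 t).
Proof. destruct t as [[a b] c]; simpl; rewrite !pi_eval; reflexivity. Qed.

Lemma p3_S2 w1 w2 t : p3 (S_2 (verbal_map G w1 w2) t) = S_2 (verbal_map A w1 w2) (p3 t).
Proof. destruct t as [[a b] c]; simpl; rewrite !pi_eval; reflexivity. Qed.
End H.

Theorem proposition5p9 (G : Group) (w1 w2 : word2) :
  two_step_nilpotent G ->
  is_YBE_solution (verbal_map G w1 w2) ->
  forall (GAb : Group) (pi : G -> GAb),
    abelianization_map G GAb pi ->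
    is_YBE_solution (verbal_map GAb w1 w2).
Proof.
  intros _ Y GAb pi [hom [sur _]] [[a b] c].
  destruct (sur a) as [x <-]; destruct (sur b) as [y <-]; destruct (sur c) as [z <-].
  change (pi x, pi y, pi z) with (@p3 G GAb pi (x, y, z)).
  repeat (rewrite <- (@p3_S1 G GAb pi hom) || rewrite <- (@p3_S2 G GAb pi hom)).
  rewrite Y. reflexivity.
Qed.
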